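(* Let $\beta\in(0,\pi/2)$ and put $\delta=\cot\beta>0$. Let $s,r\in\mathbb{R}$ with $D:=\sqrt{s^2+(\delta s-r)^2}>0$, and put $\gamma_1(s)=(2s\delta,2s,0)$, $\gamma_2(r)=(2r,0,0)\in\mathbb{R}^3$. Let $x=(x_1,x_2,x_3)$ and $y=(y_1,y_2,y_3)$ be points of $\mathbb{R}^3$ satisfying \[ \sqrt{(x_1-2s\delta)^2+(x_2-2s)^2+x_3^2}+\sqrt{(x_1-2r)^2+x_2^2+x_3^2}=\sqrt{(y_1-2s\delta)^2+(y_2-2s)^2+y_3^2}+\sqrt{(y_1-2r)^2+y_2^2+y_3^2}, \] \[ \frac{\delta(x_1-2s\delta)+(x_2-2s)}{\sqrt{(x_1-2s\delta)^2+(x_2-2s)^2+x_3^2}}=\frac{\delta(y_1-2s\delta)+(y_2-2s)}{\sqrt{(y_1-2s\delta)^2+(y_2-2s)^2+y_3^2}}, \] \[ \frac{x_1-2r}{\sqrt{(x_1-2r)^2+x_2^2+x_3^2}}=\frac{y_1-2r}{\sqrt{(y_1-2r)^2+y_2^2+y_3^2}}. \] Define $\rho\ge0$ by $\cosh\rho=\dfrac{|x-\gamma_1(s)|+|x-\gamma_2(r)|}{2D}$ (the prolate spheroidal ''radial'' coordinate of $x$ with respect to the foci $\gamma_1(s),\gamma_2(r)$, which are at distance $2D$ apart; by the first equation it is the same for $y$). If $\rho>\ln(5+8\delta)$, then either $x=y$ or $x=(y_1,y_2,-y_3)$.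
   Context: This is the setting of multistatic SAR with transmitters on the line $\gamma_1$ and receivers on the line $\gamma_2$, the two lines lying in the plane $x_3=0$ and meeting at angle $\beta$. The three equations express that the scene points $x$ and $y$ give the same bistatic travel distance $|\gamma_1(s)-\cdot|+|\cdot-\gamma_2(r)|$ and the same derivatives of it with respect to $s$ and $r$, i.e. they are the conditions for two points of the canonical relation of the forward scattering operator (phase $\omega(t-(|\gamma_1(s)-x|+|x-\gamma_2(r)|)/c_0)$) to project to the same point of the data cotangent space. The conclusion says the only possible artefact is the mirror image across the plane $x_3=0$. *)

(* Defs.v *)
From Stdlib Require Export Reals.
Open Scope R_scope.

Definition pt3 : Type := (R * R * R)%type.
Definition px1 (p : pt3) : R := fst (fst p).
Definition px2 (p : pt3) : R := snd (fst p).
Definition px3 (p : pt3) : R := snd p.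

Definition dist3 (p q : pt3) : R :=
  sqrt ((px1 p - px1 q)^2 + (px2 p - px2 q)^2 + (px3 p - px3 q)^2).

Definition cot (b : R) : R := cos b / sin b.

(* transmitter line gamma_1 and receiver line gamma_2 *)
Definition gamma1 (delta s : R) : pt3 := (2 * s * delta, 2 * s, 0).
Definition gamma2 (r : R) : pt3 := (2 * r, 0, 0).

Definition mirror (p : pt3) : pt3 := (px1 p, px2 p, - px3 p).

(* Main.v *)
Require Import Defs.
From Stdlib Require Import Reals Lra Psatz.
Open Scope R_scope.

Lemma abs_bound (u S : R) : u^2 <= S -> 0 <= S -> - sqrt S <= u <= sqrt S.
Proof.
  intros H H0.
  assert (Hr : Rabs u <= sqrt S).
  { rewrite <- sqrt_Rsqr_abs. apply sqrt_le_1_alt. unfold Rsqr. lra. }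
  revert Hr. unfold Rabs. destruct (Rcase_abs u); lra.
Qed.

Lemma sum3_nonneg (u v w : R) : 0 <= u^2 + v^2 + w^2.
Proof. pose proof (pow2_ge_0 u). pose proof (pow2_ge_0 v). pose proof (pow2_ge_0 w). lra. Qed.

Lemma sum2_nonneg (u v : R) : 0 <= u^2 + v^2.
Proof. pose proof (pow2_ge_0 u). pose proof (pow2_ge_0 v). lra. Qed.

Lemma sq0 (u : R) : u^2 = 0 -> u = 0.
Proof. intros H. destruct (Req_dec u 0) as [h|h]; auto. exfalso. exact (pow_nonzero u 2 h H). Qed.
Lemma sum3_zero (u v w : R) : u^2 + v^2 + w^2 = 0 -> u = 0 /\ v = 0 /\ w = 0.
Proof. intros H. pose proof (pow2_ge_0 u). pose proof (pow2_ge_0 v). pose proof (pow2_ge_0 w).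
 split; [|split]; apply sq0; lra. Qed.

Lemma sq_sqrt (S : R) : 0 <= S -> sqrt S * sqrt S = S.
Proof. apply sqrt_sqrt. Qed.

Lemma ab3a (u v w : R) : - sqrt (u^2+v^2+w^2) <= u <= sqrt (u^2+v^2+w^2).
Proof. apply abs_bound; [|apply sum3_nonneg]. pose proof (pow2_ge_0 v). pose proof (pow2_ge_0 w). lra. Qed.
Lemma ab3b (u v w : R) : - sqrt (u^2+v^2+w^2) <= v <= sqrt (u^2+v^2+w^2).
Proof. apply abs_bound; [|apply sum3_nonneg]. pose proof (pow2_ge_0 u). pose proof (pow2_ge_0 w). lra. Qed.
Lemma ab2a (u v : R) : - sqrt (u^2+v^2) <= u <= sqrt (u^2+v^2).
Proof. apply abs_bound; [|apply sum2_nonneg]. pose proof (pow2_ge_0 v). lra. Qed.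
Lemma ab2b (u v : R) : - sqrt (u^2+v^2) <= v <= sqrt (u^2+v^2).
Proof. apply abs_bound; [|apply sum2_nonneg]. pose proof (pow2_ge_0 u). lra. Qed.

Lemma pos_dists (d s r D L u1 u2 u3 : R) :
  0 < D -> D * D = s ^ 2 + (d * s - r) ^ 2 -> L > 2 * D ->
  sqrt ((u1 - 2 * s * d) ^ 2 + (u2 - 2 * s) ^ 2 + (u3 - 0) ^ 2)
  + sqrt ((u1 - 2 * r) ^ 2 + (u2 - 0) ^ 2 + (u3 - 0) ^ 2) = L ->
  0 < sqrt ((u1 - 2 * s * d) ^ 2 + (u2 - 2 * s) ^ 2 + (u3 - 0) ^ 2) /\
  0 < sqrt ((u1 - 2 * r) ^ 2 + (u2 - 0) ^ 2 + (u3 - 0) ^ 2).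
Proof.
  intros HD HD2 HL Hs.
  set (A := (u1 - 2 * s * d) ^ 2 + (u2 - 2 * s) ^ 2 + (u3 - 0) ^ 2) in *.
  set (B := (u1 - 2 * r) ^ 2 + (u2 - 0) ^ 2 + (u3 - 0) ^ 2) in *.
  assert (HA : 0 <= A) by apply sum3_nonneg.
  assert (HB : 0 <= B) by apply sum3_nonneg.
  pose proof (sq_sqrt A HA). pose proof (sq_sqrt B HB).
  pose proof (sqrt_pos A). pose proof (sqrt_pos B).
  split.
  - destruct (Rle_lt_or_eq_dec 0 (sqrt A) (sqrt_pos A)) as [h|h]; auto.
    exfalso.
    assert (H3 : A = 0) by nra.
    destruct (sum3_zero _ _ _ H3) as [z1 [z2 z3]].
    assert (e1 : u1 = 2 * s * d) by lra.
    assert (e2 : u2 = 2 * s) by lra.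
    assert (e3 : u3 = 0) by lra.
    assert (B = 4 * (D * D)) by (unfold B; rewrite HD2, e1, e2, e3; ring).
    nra.
  - destruct (Rle_lt_or_eq_dec 0 (sqrt B) (sqrt_pos B)) as [h|h]; auto.
    exfalso.
    assert (H3 : B = 0) by nra.
    destruct (sum3_zero _ _ _ H3) as [z1 [z2 z3]].
    assert (e1 : u1 = 2 * r) by lra.
    assert (e2 : u2 = 0) by lra.
    assert (e3 : u3 = 0) by lra.
    assert (A = 4 * (D * D)) by (unfold A; rewrite HD2, e1, e2, e3; ring).
    nra.
Qed.

Theorem mainTheorem2 (beta s r rho : R) (x y : pt3) :
  0 < beta < PI / 2 ->
  let delta := cot beta in
  let D := sqrt (s ^ 2 + (delta * s - r) ^ 2) in
  0 < D ->
  dist3 x (gamma1 delta s) + dist3 x (gamma2 r)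
    = dist3 y (gamma1 delta s) + dist3 y (gamma2 r) ->
  (delta * (px1 x - 2 * s * delta) + (px2 x - 2 * s)) / dist3 x (gamma1 delta s)
    = (delta * (px1 y - 2 * s * delta) + (px2 y - 2 * s)) / dist3 y (gamma1 delta s) ->
  (px1 x - 2 * r) / dist3 x (gamma2 r) = (px1 y - 2 * r) / dist3 y (gamma2 r) ->
  0 <= rho ->
  cosh rho = (dist3 x (gamma1 delta s) + dist3 x (gamma2 r)) / (2 * D) ->
  rho > ln (5 + 8 * delta) ->
  x = y \/ x = mirror y.
Proof.
  intros [Hb0 Hb1] delta D HD Hsum Hc1 Hc2 Hr0 Hcosh Hrho.
  assert (Hdelta : 0 < delta).
  { unfold delta, cot. pose proof PI_RGT_0. apply Rdiv_lt_0_compat.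
    - apply cos_gt_0; lra.
    - apply sin_gt_0; lra. }
  assert (Hch : cosh rho > 2 + 2 * delta).
  { assert (exp rho > 5 + 8 * delta).
    { rewrite <- (exp_ln (5 + 8 * delta)) by lra. apply exp_increasing; lra. }
    unfold cosh. pose proof (exp_pos (- rho)). lra. }
  assert (HD2 : D * D = s ^ 2 + (delta * s - r) ^ 2).
  { unfold D. apply sq_sqrt. apply sum2_nonneg. }
  destruct x as [[x1 x2] x3], y as [[y1 y2] y3].
  unfold dist3, gamma1, gamma2, mirror, px1, px2, px3 in *; cbn [fst snd] in *.
  set (L := sqrt ((x1 - 2 * s * delta) ^ 2 + (x2 - 2 * s) ^ 2 + (x3 - 0) ^ 2) +
            sqrt ((x1 - 2 * r) ^ 2 + (x2 - 0) ^ 2 + (x3 - 0) ^ 2)) in *.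
  assert (HL : L = 2 * D * cosh rho).
  { rewrite Hcosh. field. lra. }
  assert (HL2 : L > 2 * D) by nra.
  destruct (pos_dists delta s r D L x1 x2 x3 HD HD2 HL2 eq_refl) as [Ha Hb].
  destruct (pos_dists delta s r D L y1 y2 y3 HD HD2 HL2 (eq_sym Hsum)) as [Ha' Hb'].
  unfold L in *. clear L.
  set (a := sqrt ((x1 - 2 * s * delta) ^ 2 + (x2 - 2 * s) ^ 2 + (x3 - 0) ^ 2)) in *.
  set (b := sqrt ((x1 - 2 * r) ^ 2 + (x2 - 0) ^ 2 + (x3 - 0) ^ 2)) in *.
  set (a' := sqrt ((y1 - 2 * s * delta) ^ 2 + (y2 - 2 * s) ^ 2 + (y3 - 0) ^ 2)) in *.
  set (b' := sqrt ((y1 - 2 * r) ^ 2 + (y2 - 0) ^ 2 + (y3 - 0) ^ 2)) in *.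
  assert (Ea : a * a = (x1 - 2 * s * delta) ^ 2 + (x2 - 2 * s) ^ 2 + (x3 - 0) ^ 2)
    by (apply sq_sqrt; apply sum3_nonneg).
  assert (Eb : b * b = (x1 - 2 * r) ^ 2 + (x2 - 0) ^ 2 + (x3 - 0) ^ 2)
    by (apply sq_sqrt; apply sum3_nonneg).
  assert (Ea' : a' * a' = (y1 - 2 * s * delta) ^ 2 + (y2 - 2 * s) ^ 2 + (y3 - 0) ^ 2)
    by (apply sq_sqrt; apply sum3_nonneg).
  assert (Eb' : b' * b' = (y1 - 2 * r) ^ 2 + (y2 - 0) ^ 2 + (y3 - 0) ^ 2)
    by (apply sq_sqrt; apply sum3_nonneg).
  set (c1 := (delta * (x1 - 2 * s * delta) + (x2 - 2 * s)) / a) in *.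
  set (c2 := (x1 - 2 * r) / b) in *.
  assert (P : delta * (x1 - 2 * s * delta) + (x2 - 2 * s) = c1 * a)
    by (unfold c1; field; lra).
  assert (P' : delta * (y1 - 2 * s * delta) + (y2 - 2 * s) = c1 * a')
    by (rewrite Hc1; field; lra).
  assert (Q : x1 - 2 * r = c2 * b) by (unfold c2; field; lra).
  assert (Q' : y1 - 2 * r = c2 * b') by (rewrite Hc2; field; lra).
  assert (B1 := ab3a (x1 - 2 * s * delta) (x2 - 2 * s) (x3 - 0)).
  assert (B2 := ab3b (x1 - 2 * s * delta) (x2 - 2 * s) (x3 - 0)).
  assert (B3 := ab3a (x1 - 2 * r) (x2 - 0) (x3 - 0)).
  fold a in B1, B2. fold b in B3.
  assert (C2 : -1 <= c2 <= 1) by (split; nra).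
  assert (C1 : -(1 + delta) <= c1 <= 1 + delta) by (split; nra).
  assert (BS := ab2a s (delta * s - r)).
  assert (BR := ab2b s (delta * s - r)).
  fold D in BS, BR.
  assert (K1 : r * c2 >= - (D * (1 + delta))).
  { destruct (Rle_dec 0 r); nra. }
  assert (K2 : s * c1 >= - (D * (1 + delta))).
  { destruct (Rle_dec 0 s); nra. }
  assert (Id : forall u1 u2 u3 : R,
    ((u1 - 2*s*delta)^2 + (u2-2*s)^2 + (u3-0)^2) - ((u1-2*r)^2+(u2-0)^2+(u3-0)^2)
    = 4*r*(u1-2*r) - 4*s*(delta*(u1-2*s*delta)+(u2-2*s)) + (4*r^2 - 4*s^2*delta^2 - 4*s^2))
    by (intros; ring).
  pose proof (Id x1 x2 x3) as Ix. pose proof (Id y1 y2 y3) as Iy.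
  rewrite <- Ea, <- Eb, P, Q in Ix. rewrite <- Ea', <- Eb', P', Q' in Iy.
  assert (E : (a - a') * (2 * (a + b) + 4 * r * c2 + 4 * s * c1) = 0).
  { assert (b' = a + b - a') by lra. subst b'. nra. }
  assert (Pos : 2 * (a + b) + 4 * r * c2 + 4 * s * c1 > 0).
  { rewrite HL. nra. }
  assert (Eaa : a = a').
  { destruct (Rmult_integral _ _ E); lra. }
  assert (Ebb : b = b') by lra.
  assert (ex1 : x1 = y1) by (rewrite Ebb in Q; lra).
  assert (ex2 : x2 = y2) by (rewrite Eaa in P; nra).
  assert (ex3 : x3 * x3 = y3 * y3) by (rewrite Ebb in Eb; subst; nra).
  subst y1 y2.
  assert ((x3 - y3) * (x3 + y3) = 0) by nra.
  destruct (Rmult_integral _ _ H) as [h|h].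
  - left. f_equal. lra.
  - right. f_equal. lra.
Qed.
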